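(* Consider the single-authority continuum model described in the context, where each $u_m$ is differentiable but not necessarily concave. If $\mu$ is an optimal allocation (in a state $\omega$), then $\mu$ is implemented in $\omega$ by the APM $A^*$ given by $A^*_m(y_m,s)\equiv h^{-1}\big(h(s)+u_m'(y_m)\big)$.
   Context: An authority allocates a resource of measure $q\in(0,1)$ to agents with types $(s,m)\in[0,1]\times\mathcal M$ ($\mathcal M$ finite). A state $\omega$ is a type distribution with density $f_\omega$. Allocations are measurable $\mu:\Theta\to\{0,1\}$ allocating measure at most $q$. $h:[0,1]\to\mathbb R_+$ continuous strictly increasing, $\bar s_h(\mu,\omega)=\int\mu h\,dF_\omega$, $x_m(\mu,\omega)=\int_0^1\mu(s,m)f_\omega(s,m)ds$. Utility $\xi=g(\bar s_h+\sum_mu_m(x_m))$ with $g$ continuous strictly increasing and each $u_m$ differentiable; the authority always prefers to allocate the entire resource. An allocation is optimal in $\omega$ if it maximizes $\xi$ over feasible allocations. An APM $A=\{A_m\}$ implements $\mu$ in state $\omega$ if (1) $\mu(\theta)=1$ iff for all $\theta'$ with $\mu(\theta')=0$, $A_{m(\theta)}(x_{m(\theta)}(\mu,\omega),s(\theta))>A_{m(\theta')}(x_{m(\theta')}(\mu,\omega),s(\theta'))$, and (2) $\sum_mx_m(\mu,\omega)=q$.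
   Formalization: $A^*$ implements in ω some allocation that agrees with μ outside an $F_\omega$-null set, not necessarily μ itself, with $h^{-1}$ any strictly increasing function on the reals inverting h on [0,1]. The statement above fails without it. *)

(* Defs.v *)
From HB Require Import structures.
From mathcomp Require Import all_boot all_order all_algebra.
From mathcomp Require Import all_classical all_reals all_analysis.
Set Implicit Arguments. Unset Strict Implicit. Unset Printing Implicit Defensive.
Import Order.TTheory GRing.Theory Num.Theory.
Import numFieldNormedType.Exports.
Local Open Scope classical_set_scope.
Local Open Scope ring_scope.

Section Model.
Variables (R : realType) (M : finType).

Definition I01 : set R := `[0, 1]%classic.

(* A state omega is represented by its density f : [0,1] x M -> R
   (density w.r.t. Lebesgue measure on [0,1] times counting measure on M). *)
Definition is_density (f : R -> M -> R) : Prop :=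
  [/\ (forall m s, s \in I01 -> 0 <= f s m),
      (forall m, lebesgue_measure.-integrable I01 (fun s => (f s m)%:E)) &
      \sum_(m : M) Rintegral lebesgue_measure I01 (fun s => f s m) = 1].

Definition xm (f : R -> M -> R) (mu : R -> M -> bool) (m : M) : R :=
  Rintegral lebesgue_measure I01 (fun s => (mu s m)%:R * f s m).

Definition sbar (h : R -> R) (f : R -> M -> R) (mu : R -> M -> bool) : R :=
  \sum_(m : M) Rintegral lebesgue_measure I01 (fun s => (mu s m)%:R * h s * f s m).

Definition xi (g h : R -> R) (u : M -> R -> R) (f : R -> M -> R)
    (mu : R -> M -> bool) : R :=
  g (sbar h f mu + \sum_(m : M) u m (xm f mu m)).

Definition allocation (mu : R -> M -> bool) : Prop :=
  forall m, measurable (I01 `&` [set s | mu s m]).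

Definition feasible (q : R) (f : R -> M -> R) (mu : R -> M -> bool) : Prop :=
  allocation mu /\ \sum_(m : M) xm f mu m <= q.

Definition optimal (q : R) (g h : R -> R) (u : M -> R -> R) (f : R -> M -> R)
    (mu : R -> M -> bool) : Prop :=
  feasible q f mu /\
  forall mu', feasible q f mu' -> xi g h u f mu' <= xi g h u f mu.

(* The authority always prefers to allocate the entire resource: any feasible
   allocation leaving some resource unallocated can be strictly improved by a
   feasible allocation allocating (pointwise) more. *)
Definition prefers_full (q : R) (g h : R -> R) (u : M -> R -> R)
    (f : R -> M -> R) : Prop :=
  forall mu, feasible q f mu -> \sum_(m : M) xm f mu m < q ->
    exists mu', [/\ feasible q f mu', (forall s m, mu s m -> mu' s m) &
                    xi g h u f mu < xi g h u f mu'].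

Definition implements (q : R) (A : M -> R -> R -> R) (f : R -> M -> R)
    (mu : R -> M -> bool) : Prop :=
  (forall s m, s \in I01 ->
     (mu s m <-> (forall s' m', s' \in I01 -> ~~ mu s' m' ->
                    A m' (xm f mu m') s' < A m (xm f mu m) s))) /\
  \sum_(m : M) xm f mu m = q.

Definition Astar (hinv : R -> R) (h : R -> R) (u : M -> R -> R) : M -> R -> R -> R :=
  fun m y s => hinv (h s + derive1 (u m) y).

Definition ae_equal (f : R -> M -> R) (mu mu' : R -> M -> bool) : Prop :=
  forall m, lebesgue_measure.-negligible
    [set s | s \in I01 /\ f s m != 0 /\ mu s m != mu' s m].

End Model.

(* Main.v *)
Require Import Defs.
From HB Require Import structures.
From mathcomp Require Import all_boot all_order all_algebra.
From mathcomp Require Import all_classical all_reals all_analysis.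
From mathcomp Require Import measurable_realfun.
From mathcomp Require Import lra.
Import Order.TTheory GRing.Theory Num.Theory.
Import numFieldNormedType.Exports.
Local Open Scope classical_set_scope.
Local Open Scope ring_scope.
Lemma der_approx (R : realType) (u : R -> R) (x : R) : derivable u x 1 ->
  forall eta : R, 0 < eta -> exists2 del : R, 0 < del &
   forall d, `|d| < del -> `|u (x + d) - u x - d * derive1 u x| <= eta * `|d|.
Proof.
move=> Hd eta eta0.
have H : (fun h => h^-1 *: ((u \o shift x) (h *: 1) - u x)) @ 0^' --> derive1 u x.
  by rewrite derive1E; exact: Hd.
move/fcvgrPdist_lt : H => /(_ eta eta0).
move=> Hn.
have : \forall h \near (0:R)^', `|derive1 u x - h^-1 *: ((u \o shift x) (h *: 1) - u x)| < eta := Hn.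
rewrite near_withinE => /nbhs_ballP [del /= del0 Hb].
exists del => // d dlt.
have [->|d0] := eqVneq d 0.
  by rewrite addr0 subrr mul0r subr0 normr0 mulr0.
have : ball 0 del d by rewrite /ball /= sub0r normrN.
move/Hb => /(_ d0) /=.
have -> : d%:A = d :> R by rewrite /GRing.scale /= mulr1.
rewrite [d + x]addrC => H.
have E : u (x + d) - u x - d * derive1 u x =
  - (d * (derive1 u x - d^-1 *: (u (x + d) - u x))).
  by rewrite /GRing.scale /= mulrBr mulrA mulfV // mul1r opprB.
rewrite E normrN normrM mulrC.
by apply: ler_wpM2r; [exact: normr_ge0 | exact: ltW].
Qed.

Lemma mI01 (R : realType) : measurable (@I01 R : set (measurableTypeR R)).
Proof. exact: measurable_itv. Qed.

Lemma XM (R : realType) (b : R -> bool) (p : R -> R) :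
  \int[lebesgue_measure]_(s in @I01 R) ((b s)%:R * p s) =
  \int[lebesgue_measure]_(s in [set s | b s] `&` @I01 R) p s.
Proof.
rewrite Rintegral_mkcondl; apply: eq_Rintegral => s _.
rewrite patchE; case: (boolP (b s)) => bs.
  by rewrite mem_set // mul1r.
by rewrite memNset ?mul0r //; exact/negP.
Qed.

Lemma negl0 (R : realType) (p : R -> R) (X : set R) :
  measurable X -> X `<=` @I01 R ->
  lebesgue_measure.-integrable (@I01 R) (EFin \o p) ->
  (forall s, X s -> 0 <= p s) ->
  \int[lebesgue_measure]_(s in X) p s = 0 ->
  lebesgue_measure.-negligible (X `&` [set s | p s != 0]).
Proof.
move=> mX0 XI ip p0 i0.
have mX : measurable (X : set (measurableTypeR R)) := mX0.
have iX : lebesgue_measure.-integrable X (EFin \o p).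
  exact: (integrableS (mI01 R) mX XI ip).
have mp := measurable_int _ iX.
have /measurable_EFinP mp' := mp.
have E : X `&` [set s | p s != 0] =
  \bigcup_n (X `&` p @^-1` `[n.+1%:R^-1, +oo[).
  apply/seteqP; split => s /=.
    move=> [Xs ps]; have ps' : 0 < p s by rewrite lt0r ps p0.
    have [n Hn] := @ltr_add_invr R 0 (p s) ps'.
    exists n; first by [].
    split => //=; rewrite in_itv /= andbT.
    by apply: ltW; move: Hn; rewrite add0r.
  move=> [n _ [Xs]]; rewrite /= in_itv /= andbT => H; split => //.
  apply/negP => /eqP ps; move: H; rewrite ps leNgt.
  by rewrite invr_gt0 ltr0n.
rewrite E; apply: negligible_bigcup => n.
have mA : measurable ((X `&` p @^-1` `[n.+1%:R^-1, +oo[) : set (measurableTypeR R)).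
  exact: mp'.
apply/negligibleP => //.
have := @le_integral_comp_abse _ _ _ lebesgue_measure X mX (EFin \o p)
  (n.+1%:R^-1) id (@measurable_id _ _ setT) (fun r r0 => r0) (fun a b _ _ ab => ab) mp.
rewrite invr_gt0 ltr0n => /(_ erefl).
have -> : (\int[lebesgue_measure]_(x in X) id `|(EFin \o p) x|)%E = 0%E.
  transitivity (\int[lebesgue_measure]_(x in X) (EFin \o p) x)%E.
    by apply: eq_integral => s /[!inE] Xs /=; rewrite ger0_norm ?p0.
  move: i0; rewrite /Rintegral => i0.
  have := integrable_fin_num mX iX.
  by move=> /fineK <-; rewrite i0.
have -> : X `&` [set x | ((n.+1%:R^-1)%:E <= `|(EFin \o p) x|)%E] =
          X `&` p @^-1` `[n.+1%:R^-1, +oo[.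
  apply/seteqP; split => s [Xs] /=; rewrite ?in_itv /= ?andbT ?lee_fin ger0_norm ?p0 //.
move=> H; apply/eqP; rewrite eq_le measure_ge0 andbT.
by move: H; rewrite pmule_rle0 // lte_fin invr_gt0 ltr0n.
Qed.

Lemma ivt_split (R : realType) (p : R -> R) (X : set R) :
  measurable X -> X `<=` @I01 R ->
  lebesgue_measure.-integrable (@I01 R) (EFin \o p) ->
  forall e, 0 <= e <= \int[lebesgue_measure]_(s in X) p s ->
  exists Y : set R, [/\ measurable Y, Y `<=` X &
     \int[lebesgue_measure]_(s in Y) p s = e].
Proof.
move=> mX0 XI ip e /andP[e0 eI].
have mX : measurable (X : set (measurableTypeR R)) := mX0.
have iX : lebesgue_measure.-integrable X (EFin \o p).
  exact: (integrableS (mI01 R) mX XI ip).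
have iT := (integrable_mkcond _ mX).1 iX.
have i01 : lebesgue_measure.-integrable `[0%R, 1%R] (EFin \o (p \_ X)).
  have -> : EFin \o (p \_ X) = (EFin \o p) \_ X.
    by apply/funext => s; rewrite /= !patchE; case: ifP.
  by apply: (integrableS measurableT _ _ iT).
have cont := parameterized_integral_continuous ler01 i01.
set F := fun r => parameterized_integral lebesgue_measure 0 r (p \_ X).
have F0 : F 0 = 0.
  by rewrite /F /parameterized_integral set_itv1 Rintegral_set1.
have F1 : F 1 = \int[lebesgue_measure]_(s in X) p s.
  rewrite /F /parameterized_integral -Rintegral_mkcondl.
  by rewrite (setIidl XI).
have [r r01 Fr] : exists2 r, r \in `[0%R, 1%R] & F r = e.
  apply: IVT => //.
  rewrite F0 F1; apply/andP; split.
    by rewrite ge_min e0.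
  by rewrite le_max eI orbT.
exists (X `&` `[0%R, r]); split.
- exact: measurableI.
- by move=> s [].
- by rewrite Rintegral_mkcondl -Fr.
Qed.

Lemma swapI (R : realType) (p : R -> R) (X Y Z : set R) :
  measurable X -> measurable Y -> measurable Z ->
  X `<=` @I01 R -> Y `<=` X -> Z `<=` @I01 R -> (forall s, Z s -> ~ X s) ->
  lebesgue_measure.-integrable (@I01 R) (EFin \o p) ->
  \int[lebesgue_measure]_(s in (X `\` Y) `|` Z) p s =
  \int[lebesgue_measure]_(s in X) p s - \int[lebesgue_measure]_(s in Y) p s
  + \int[lebesgue_measure]_(s in Z) p s.
Proof.
move=> mX0 mY0 mZ0 XI YX ZI ZX ip.
have mX : measurable (X : set (measurableTypeR R)) := mX0.
have mY : measurable (Y : set (measurableTypeR R)) := mY0.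
have mZ : measurable (Z : set (measurableTypeR R)) := mZ0.
have iS : forall W : set R, measurable (W : set (measurableTypeR R)) ->
    W `<=` @I01 R -> lebesgue_measure.-integrable W (EFin \o p).
  by move=> W mW WI; exact: (integrableS (mI01 R) mW WI ip).
have mXY : measurable ((X `\` Y) : set (measurableTypeR R)) by exact: measurableD.
have E1 : \int[lebesgue_measure]_(s in X) p s =
    \int[lebesgue_measure]_(s in X `\` Y) p s + \int[lebesgue_measure]_(s in Y) p s.
  rewrite -{1}(setDUK YX) setUC Rintegral_setU //.
  - apply: iS; first exact: measurableU.
    by move=> s [[/XI]|/YX/XI].
  - by rewrite /disj_set; apply/eqP/seteqP; split => s // [[_ nYs] Ys].
rewrite E1 Rintegral_setU //; last 2 first.
  - apply: iS; first exact: measurableU.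
    by move=> s [[/XI]|/ZI].
  - by rewrite /disj_set; apply/eqP/seteqP; split => s // [[Xs _] /ZX].
by rewrite addrK.
Qed.


Lemma sum_ind (R : realType) (M : finType) (m : M) (F : M -> R) :
  \sum_(k : M) (k == m)%:R * F k = F m.
Proof.
rewrite (bigD1 m) //= eqxx mul1r big1 ?addr0 // => k /negbTE ->.
by rewrite mul0r.
Qed.

Lemma h_meas (R : realType) (h : R -> R) :
  {within (@I01 R), continuous h} ->
  measurable_fun (@I01 R : set (measurableTypeR R)) h.
Proof.
move=> hc.
have := @subspace_continuous_measurable_fun R (@I01 R) h (measurable_itv _) hc.
by [].
Qed.

Lemma hset_lt (R : realType) (h : R -> R) (k : R) :
  {within (@I01 R), continuous h} ->
  measurable (@I01 R `&` [set s | h s < k]).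
Proof.
move=> hc; have := @h_meas R h hc (mI01 R) _ (measurable_itv `]-oo, k[).
have -> : h @^-1` `]-oo, k[ = [set s | h s < k].
  by apply/seteqP; split => s /=; rewrite in_itv.
by [].
Qed.

Lemma hset_gt (R : realType) (h : R -> R) (k : R) :
  {within (@I01 R), continuous h} ->
  measurable (@I01 R `&` [set s | k < h s]).
Proof.
move=> hc; have := @h_meas R h hc (mI01 R) _ (measurable_itv `]k, +oo[).
have -> : h @^-1` `]k, +oo[ = [set s | k < h s].
  by apply/seteqP; split => s /=; rewrite in_itv /= andbT.
by [].
Qed.

Lemma h_bound (R : realType) (h : R -> R) :
  {in (@I01 R) &, forall a b, a < b -> h a < h b} ->
  (forall s, s \in (@I01 R) -> 0 <= h s) ->
  forall s, s \in (@I01 R) -> 0 <= h s <= h 1.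
Proof.
move=> hm h0 s sI; rewrite h0 //=.
have I1 : (1 : R) \in (@I01 R) by rewrite inE /I01 /= in_itv /= ler01 lexx.
have : s <= 1 by move: sI; rewrite inE /I01 /= in_itv /= => /andP[].
rewrite le_eqVlt => /orP[/eqP -> //|s1].
by apply: ltW; apply: hm.
Qed.

Lemma hf_int (R : realType) (h p : R -> R) :
  {within (@I01 R), continuous h} ->
  {in (@I01 R) &, forall a b, a < b -> h a < h b} ->
  (forall s, s \in (@I01 R) -> 0 <= h s) ->
  lebesgue_measure.-integrable (@I01 R) (EFin \o p) ->
  lebesgue_measure.-integrable (@I01 R) (EFin \o (fun s => h s * p s)).
Proof.
move=> hc hm h0 ip.
have -> : EFin \o (fun s => h s * p s) = ((EFin \o h) \* (EFin \o p))%E.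
  by apply/funext => s.
apply: integrableMr => //; first exact: mI01.
  exact: (@h_meas R h hc).
exists (h 1); split; first exact: num_real.
move=> M hM s Is; have /andP[hs0 hs1] := @h_bound R h hm h0 s (mem_set Is).
rewrite /= ger0_norm //; apply: (le_trans hs1); exact: ltW.
Qed.


Lemma U_bound (R : realType) (M : finType) (u : M -> R -> R) (x c : M -> R)
  (m m' : M) (e eta d1 d2 : R) :
  (forall d, `|d| < d1 -> `|u m (x m + d) - u m (x m) - d * c m| <= eta * `|d|) ->
  (forall d, `|d| < d2 -> `|u m' (x m' + d) - u m' (x m') - d * c m'| <= eta * `|d|) ->
  0 <= e -> e < d1 -> e < d2 -> 0 <= eta ->
  e * c m' - e * c m - 2 * eta * e <=
  \sum_(k : M) u k (x k - (k == m)%:R * e + (k == m')%:R * e) - \sum_(k : M) u k (x k).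
Proof.
move=> H1 H2 e0 ed1 ed2 eta0.
set d := fun k : M => (k == m')%:R * e - (k == m)%:R * e.
have key : forall k, d k * c k - eta * `|d k| <= u k (x k - (k == m)%:R * e + (k == m')%:R * e) - u k (x k).
  move=> k.
  have -> : x k - (k == m)%:R * e + (k == m')%:R * e = x k + d k.
    by rewrite /d; lra.
  have gen : forall dd : R, `|u k (x k + dd) - u k (x k) - dd * c k| <= eta * `|dd| ->
      dd * c k - eta * `|dd| <= u k (x k + dd) - u k (x k).
    move=> dd; rewrite ler_norml => /andP[H _]; lra.
  case: (eqVneq k m) => [km|km].
    case: (eqVneq m m') => [mm'|mm'].
      have -> : d k = 0 by rewrite /d km mm' eqxx /= ?mulr1n ?mulr0n ?mul1r ?mul0r; lra.
      by rewrite addr0 subrr mul0r normr0 mulr0 subrr.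
    have dk : d k = - e by rewrite /d km eqxx (negbTE mm') /= ?mulr1n ?mulr0n ?mul1r ?mul0r; lra.
    apply: gen; rewrite km; apply: H1; rewrite -km dk normrN ger0_norm //.
  case: (eqVneq k m') => [km'|km'].
    have dk : d k = e by rewrite /d (negbTE km) km' eqxx /= ?mulr1n ?mulr0n ?mul1r ?mul0r; lra.
    apply: gen; rewrite km'; apply: H2; rewrite -km' dk ger0_norm //.
  have -> : d k = 0 by rewrite /d (negbTE km) (negbTE km') /= ?mulr1n ?mulr0n ?mul1r ?mul0r; lra.
  by rewrite addr0 subrr mul0r normr0 mulr0 subrr.
rewrite -sumrB.
apply: le_trans (ler_sum _ (fun k _ => key k)).
rewrite sumrB.
have -> : \sum_k d k * c k = e * c m' - e * c m.
  rewrite /d; under eq_bigr => k _ do rewrite mulrBl -!mulrA.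
  by rewrite sumrB (@sum_ind R M m' (fun k => e * c k)) (@sum_ind R M m (fun k => e * c k)).
have : \sum_k eta * `|d k| <= eta * (2 * e).
  rewrite -mulr_sumr; apply: ler_wpM2l => //.
  apply: (@le_trans _ _ (\sum_k ((k == m')%:R * e + (k == m)%:R * e))).
    apply: ler_sum => k _; rewrite /d.
    apply: (le_trans (ler_normB _ _)).
    by rewrite !normrM !ger0_norm ?ler0n.
  rewrite big_split /= (@sum_ind R M m' (fun _ => e)) (@sum_ind R M m (fun _ => e)); lra.
lra.
Qed.


Lemma XMh (R : realType) (b : R -> bool) (h p : R -> R) :
  \int[lebesgue_measure]_(s in @I01 R) ((b s)%:R * h s * p s) =
  \int[lebesgue_measure]_(s in [set s | b s] `&` @I01 R) (h s * p s).
Proof.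
rewrite -XM; apply: eq_Rintegral => s _; by rewrite mulrA.
Qed.

Lemma foc (R : realType) (M : finType) (q : R) (h g : R -> R)
    (u : M -> R -> R) (f : R -> M -> R) (mu : R -> M -> bool) :
  {within (@I01 R), continuous h} ->
  {in (@I01 R) &, forall a b, a < b -> h a < h b} ->
  (forall s, s \in (@I01 R) -> 0 <= h s) ->
  {homo g : a b / a < b} ->
  (forall m y, derivable (u m) y 1) ->
  is_density f ->
  optimal q g h u f mu ->
  forall (m m' : M) (a b : R), a < b ->
  0 < \int[lebesgue_measure]_(s in ([set s | mu s m] `&` @I01 R) `&`
        [set s | h s + derive1 (u m) (xm f mu m) < a]) f s m ->
  0 < \int[lebesgue_measure]_(s in ([set s | ~~ mu s m'] `&` @I01 R) `&`
        [set s | b < h s + derive1 (u m') (xm f mu m')]) f s m' ->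
  False.
Proof.
move=> hc hm h0 gm ud [f0 fi _] [[alc sq] opt] m m' a b ab.
set c := fun k => derive1 (u k) (xm f mu k).
set Al := fun k => [set s | mu s k] `&` @I01 R.
have mAl : forall k, measurable (Al k) by move=> k; rewrite /Al setIC; exact: alc.
have AlI : forall k, Al k `<=` @I01 R by move=> k s [].
set A := Al m `&` [set s | h s + c m < a].
set B := ([set s | ~~ mu s m'] `&` @I01 R) `&` [set s | b < h s + c m'].
move=> PA PB.
have mA : measurable A.
  have -> : A = Al m `&` (@I01 R `&` [set s | h s < a - c m]).
    apply/seteqP; split => s; rewrite /A /Al /=.
      by move=> [[ms Is] H]; do ?split => //; lra.
    by move=> [[ms Is] [_ H]]; do ?split => //; lra.
  by apply: measurableI => //; exact: hset_lt.
have mB : measurable B.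
  have -> : B = (@I01 R `\` Al m') `&` (@I01 R `&` [set s | b - c m' < h s]).
    apply/seteqP; split => s; rewrite /B /Al /=.
      move=> [[nms Is] H]; do ?split => //; last by lra.
      by move=> [/= ms _]; move: nms; rewrite ms.
    move=> [[Is nAl] [_ H]]; do ?split => //; last by lra.
    by apply/negP => ms; apply: nAl.
  apply: measurableI; first exact: measurableD (mI01 R) (mAl m').
  exact: hset_gt.
have AI : A `<=` @I01 R by move=> s [[]].
have BI : B `<=` @I01 R by move=> s [[]].
set P := \int[lebesgue_measure]_(s in A) f s m.
set Q := \int[lebesgue_measure]_(s in B) f s m'.
pose eta := (b - a) / 4.
have eta0 : 0 < eta by rewrite /eta divr_gt0 // ?subr_gt0 // ltr0n.
have [d1 d10 H1] := @der_approx R (u m) (xm f mu m) (ud _ _) eta eta0.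
have [d2 d20 H2] := @der_approx R (u m') (xm f mu m') (ud _ _) eta eta0.
pose e := Num.min (Num.min P Q) (Num.min d1 d2 / 2).
have e0 : 0 < e.
  by rewrite /e !lt_min PA PB /= divr_gt0 // lt_min d10 d20.
have eP : e <= P by rewrite /e !ge_min lexx.
have eQ : e <= Q by rewrite /e !ge_min lexx orbT.
have dd : Num.min d1 d2 / 2 < Num.min d1 d2.
  by rewrite ltr_pdivrMr // ltr_pMr ?lt_min ?d10 ?d20 // ltr1n.
have e1 : e <= Num.min d1 d2 / 2 by rewrite /e ge_min lexx orbT.
have ed1 : e < d1.
  by apply: (lt_le_trans (le_lt_trans e1 dd)); rewrite ge_min lexx.
have ed2 : e < d2.
  by apply: (lt_le_trans (le_lt_trans e1 dd)); rewrite ge_min lexx orbT.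
have eP' : 0 <= e <= P by rewrite (ltW e0) eP.
have eQ' : 0 <= e <= Q by rewrite (ltW e0) eQ.
have [Y [mY YA IY]] := @ivt_split R (fun s => f s m) A mA AI (fi m) e eP'.
have [Z [mZ ZB IZ]] := @ivt_split R (fun s => f s m') B mB BI (fi m') e eQ'.
have YI : Y `<=` @I01 R by move=> s /YA /AI.
have ZI : Z `<=` @I01 R by move=> s /ZB /BI.
pose Yk := fun k => if k == m then Y else set0.
pose Zk := fun k => if k == m' then Z else set0.
pose mu2 := fun s k => (mu s k && ~~ ((k == m) && `[< Y s >])) || ((k == m') && `[< Z s >]).
have E2 : forall k, [set s | mu2 s k] `&` @I01 R = (Al k `\` Yk k) `|` Zk k.
  move=> k; apply/seteqP; split => s; rewrite /mu2 /Al /Yk /Zk /=.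
    move=> [/orP[/andP[ms nY]|/andP[/eqP km' /asboolP Zs]] Is].
      left; split => //; case: eqP nY => //= km /negP nY Ys; apply: nY; exact/asboolP.
    by right; rewrite km' eqxx.
  case.
    move=> [[ms Is] nY]; split => //; apply/orP; left; rewrite ms /=.
    by case: eqP nY => //= _ nY; apply/asboolP.
  case: eqP => // km' Zs; split; last exact: ZI.
  by apply/orP; right; apply/asboolP.
have mYk : forall k, measurable (Yk k) by move=> k; rewrite /Yk; case: eqP.
have mZk : forall k, measurable (Zk k) by move=> k; rewrite /Zk; case: eqP.
have YkAl : forall k, Yk k `<=` Al k.
  move=> k s; rewrite /Yk; case: eqP => // -> /YA [].
  by [].
have ZkI : forall k, Zk k `<=` @I01 R.
  by move=> k s; rewrite /Zk; case: eqP => // _ /ZI.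
have ZkAl : forall k s, Zk k s -> ~ Al k s.
  move=> k s; rewrite /Zk; case: eqP => // -> /ZB [[/= nms _] _] [/= ms _].
  by move: nms; rewrite ms.
have genS : forall p : R -> R,
    lebesgue_measure.-integrable (@I01 R) (EFin \o p) -> forall k,
    \int[lebesgue_measure]_(s in [set s | mu2 s k] `&` @I01 R) p s =
    \int[lebesgue_measure]_(s in Al k) p s - \int[lebesgue_measure]_(s in Yk k) p s
    + \int[lebesgue_measure]_(s in Zk k) p s.
  move=> p ip k; rewrite E2; exact: (@swapI R p (Al k) (Yk k) (Zk k) (mAl k) (mYk k) (mZk k) (AlI k) (@YkAl k) (ZkI k) (ZkAl k) ip).
have xm2 : forall k, xm f mu2 k = xm f mu k - (k == m)%:R * e + (k == m')%:R * e.
  move=> k; rewrite /xm !XM genS; last exact: fi.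
  congr (_ - _ + _).
    by rewrite /Yk; case: eqP => [->|_]; rewrite ?IY ?mul1r ?Rintegral_set0 ?mul0r.
  by rewrite /Zk; case: eqP => [->|_]; rewrite ?IZ ?mul1r ?Rintegral_set0 ?mul0r.
set Yh := \int[lebesgue_measure]_(s in Y) (h s * f s m).
set Zh := \int[lebesgue_measure]_(s in Z) (h s * f s m').
have sb2 : sbar h f mu2 = sbar h f mu - Yh + Zh.
  have Ek : forall k, \int[lebesgue_measure]_(s in @I01 R) ((mu2 s k)%:R * h s * f s k) =
     \int[lebesgue_measure]_(s in @I01 R) ((mu s k)%:R * h s * f s k)
     - (k == m)%:R * Yh + (k == m')%:R * Zh.
    move=> k; rewrite !XMh genS; last exact: (@hf_int R h (fun s => f s k) hc hm h0 (fi k)).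
    congr (_ - _ + _).
      by rewrite /Yk; case: eqP => [->|_]; rewrite ?mul1r ?Rintegral_set0 ?mul0r.
    by rewrite /Zk; case: eqP => [->|_]; rewrite ?mul1r ?Rintegral_set0 ?mul0r.
  rewrite /sbar (eq_bigr _ (fun k _ => Ek k)) big_split /= sumrB.
  by rewrite (@sum_ind R M m (fun _ => Yh)) (@sum_ind R M m' (fun _ => Zh)).
have feas2 : feasible q f mu2.
  split.
    by move=> k; rewrite setIC E2; apply: measurableU => //; apply: measurableD.
  rewrite (eq_bigr _ (fun k _ => xm2 k)) big_split /= sumrB.
  rewrite (@sum_ind R M m (fun _ => e)) (@sum_ind R M m' (fun _ => e)).
  by rewrite subrK.
have Yb : Yh <= (a - c m) * e.
  rewrite -IY -RintegralZl //; last first.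
    exact: (integrableS (mI01 R) mY YI (fi m)).
  apply: le_Rintegral => //.
  - exact: (integrableS (mI01 R) mY YI (@hf_int R h (fun s => f s m) hc hm h0 (fi m))).
  - have -> : EFin \o (fun s => (a - c m) * f s m) = (fun s => ((a - c m)%:E * (f s m)%:E)%E) by apply/funext.
    exact: (integrableZl (mY : measurable (Y : set (measurableTypeR R))) _ (integrableS (mI01 R) mY YI (fi m))).
  move=> s Ys; have [[_ Is] hs] := YA s Ys.
  apply: ler_wpM2r; first by apply: f0; exact: mem_set.
  move: hs => /=; lra.
have Zb : (b - c m') * e <= Zh.
  rewrite -IZ -RintegralZl //; last first.
    exact: (integrableS (mI01 R) mZ ZI (fi m')).
  apply: le_Rintegral => //.
  - have -> : EFin \o (fun s => (b - c m') * f s m') = (fun s => ((b - c m')%:E * (f s m')%:E)%E) by apply/funext.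
    exact: (integrableZl (mZ : measurable (Z : set (measurableTypeR R))) _ (integrableS (mI01 R) mZ ZI (fi m'))).
  - exact: (integrableS (mI01 R) mZ ZI (@hf_int R h (fun s => f s m') hc hm h0 (fi m'))).
  move=> s Zs; have [[_ Is] hs] := ZB s Zs.
  apply: ler_wpM2r; first by apply: f0; exact: mem_set.
  move: hs => /=; lra.
have Ub := @U_bound R M u (xm f mu) c m m' e eta d1 d2 H1 H2 (ltW e0) ed1 ed2 (ltW eta0).
have U2 : \sum_(k : M) u k (xm f mu2 k) =
    \sum_(k : M) u k (xm f mu k - (k == m)%:R * e + (k == m')%:R * e).
  by apply: eq_bigr => k _; rewrite xm2.
have pos : 0 < (b - a) * e by rewrite mulr_gt0 // subr_gt0.
have lt_in : sbar h f mu + \sum_(k : M) u k (xm f mu k) <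
             sbar h f mu2 + \sum_(k : M) u k (xm f mu2 k).
  rewrite sb2 U2; move: Ub Yb Zb pos; rewrite /eta; lra.
have := opt mu2 feas2; rewrite /xi => H.
by have := gm _ _ lt_in; rewrite ltNge H.
Qed.


Lemma ind_meas (R : realType) (b : R -> bool) :
  measurable (@I01 R `&` [set s | b s]) ->
  measurable_fun (@I01 R : set (measurableTypeR R)) (fun s => ((b s)%:R : R)).
Proof.
move=> mb0.
have mb : measurable ((@I01 R `&` [set s | b s]) : set (measurableTypeR R)) := mb0.
have H := @measurable_indic _ (measurableTypeR R) R (@I01 R) _ mb.
apply: (eq_measurable_fun _ _ H).
move=> s /[!inE] Is; rewrite /indic.
case: (boolP (b s)) => bs.
  by rewrite mem_set.
by rewrite memNset //= => -[_]; apply/negP.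
Qed.

Lemma xm_ae (R : realType) (M : finType) (f : R -> M -> R) (mu mu2 : R -> M -> bool) (k : M) :
  lebesgue_measure.-integrable (@I01 R) (fun s => (f s k)%:E) ->
  measurable (@I01 R `&` [set s | mu s k]) ->
  measurable (@I01 R `&` [set s | mu2 s k]) ->
  lebesgue_measure.-negligible [set s | s \in @I01 R /\ f s k != 0 /\ mu s k != mu2 s k] ->
  xm f mu k = xm f mu2 k.
Proof.
move=> fi m1 m2 N.
have /measurable_EFinP mf := measurable_int _ fi.
rewrite /xm /Rintegral; congr fine.
apply: ae_eq_integral.
- exact: mI01.
- apply/measurable_EFinP; apply: measurable_funM => //; exact: ind_meas.
- apply/measurable_EFinP; apply: measurable_funM => //; exact: ind_meas.
apply: negligibleS N => s /= /not_implyP [Is H]; split; first exact: mem_set.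
split.
  by apply/negP => /eqP f0; apply: H; rewrite f0 !mulr0.
by apply/negP => /eqP e; apply: H; rewrite e.
Qed.


Theorem proposition11 (R : realType) (M : finType) (q : R)
    (h g hinv : R -> R) (u : M -> R -> R) (f : R -> M -> R)
    (mu : R -> M -> bool) :
  0 < q < 1 ->
  {within (@I01 R), continuous h} ->
  {in (@I01 R) &, forall a b, a < b -> h a < h b} ->
  (forall s, s \in (@I01 R) -> 0 <= h s) ->
  continuous g ->
  {homo g : a b / a < b} ->
  (forall m y, derivable (u m) y 1) ->
  {homo hinv : a b / a < b} ->
  (forall s, s \in (@I01 R) -> hinv (h s) = s) ->
  is_density f ->
  prefers_full q g h u f ->
  optimal q g h u f mu ->
  exists mu', [/\ allocation mu', ae_equal f mu mu' &
                  implements q (Astar hinv h u) f mu'].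
Proof.
move=> /andP[q0 q1] hc hm h0 gc gm ud hinvm hinvh dens pf opt.
have [f0 fi fsum] := dens.
have [[alc sq] optm] := opt.
have sumq : \sum_(k : M) xm f mu k = q.
  apply/eqP; rewrite eq_le sq /= leNgt; apply/negP => lt.
  have [mu3 [feas3 _ lt3]] := pf mu (conj alc sq) lt.
  by have := optm mu3 feas3; rewrite leNgt lt3.
set c := fun k => derive1 (u k) (xm f mu k).
have FOC := @foc R M q h g u f mu hc hm h0 gm ud dens opt.
set AS := fun a k => ([set s | mu s k] `&` @I01 R) `&` [set s | h s + c k < a].
set BS := fun b k => ([set s | ~~ mu s k] `&` @I01 R) `&` [set s | b < h s + c k].
have mAl : forall k, measurable ([set s | mu s k] `&` @I01 R).
  by move=> k; rewrite setIC; exact: alc.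
have mAS : forall a k, measurable (AS a k).
  move=> a k.
  have -> : AS a k = ([set s | mu s k] `&` @I01 R) `&` (@I01 R `&` [set s | h s < a - c k]).
    apply/seteqP; split => s; rewrite /AS /=.
      by move=> [[ms Is] H]; do ?split => //; lra.
    by move=> [[ms Is] [_ H]]; do ?split => //; lra.
  by apply: measurableI => //; exact: hset_lt.
have mBS : forall b k, measurable (BS b k).
  move=> b k.
  have -> : BS b k = (@I01 R `\` ([set s | mu s k] `&` @I01 R)) `&` (@I01 R `&` [set s | b - c k < h s]).
    apply/seteqP; split => s; rewrite /BS /=.
      move=> [[nms Is] H]; do ?split => //; last by lra.
      by move=> [/= ms _]; move: nms; rewrite ms.
    move=> [[Is nAl] [_ H]]; do ?split => //; last by lra.
    by apply/negP => ms; apply: nAl.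
  apply: measurableI; first exact: measurableD (mI01 R) (mAl k).
  exact: hset_gt.
have ASI : forall a k, AS a k `<=` @I01 R by move=> a k s [[]].
have BSI : forall b k, BS b k `<=` @I01 R by move=> b k s [[]].
have f0' : forall k s, @I01 R s -> 0 <= f s k by move=> k s Is; apply: f0; exact: mem_set.
have ASge0 : forall a k, 0 <= \int[lebesgue_measure]_(s in AS a k) f s k.
  by move=> a k; apply: Rintegral_ge0 => s /ASI; exact: f0'.
have BSge0 : forall b k, 0 <= \int[lebesgue_measure]_(s in BS b k) f s k.
  by move=> b k; apply: Rintegral_ge0 => s /BSI; exact: f0'.
have nonempty_of_pos : forall (X : set R) (p : R -> R),
    0 < \int[lebesgue_measure]_(s in X) p s -> exists s, X s.
  move=> X p; case: (pselect (exists s, X s)) => // Hn.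
  have -> : X = set0 by apply/seteqP; split => s // Xs; apply: Hn; exists s.
  by rewrite Rintegral_set0 ltxx.
set C := \sum_(k : M) `|c k|.
have cb : forall k, `|c k| <= C.
  by move=> k; rewrite /C (bigD1 k) //= lerDl sumr_ge0.
have C0 : 0 <= C by rewrite /C sumr_ge0.
have I1 : @I01 R 1 by rewrite /I01 /= in_itv /= ler01 lexx.
have hb : forall s, @I01 R s -> 0 <= h s <= h 1.
  by move=> s Is; apply: h_bound => //; exact: mem_set.
have h10 : 0 <= h 1 by have /andP[] := hb 1 I1.
have vlow : forall k s, @I01 R s -> - C - 1 < h s + c k.
  move=> k s Is; have /andP[hs0 _] := hb s Is.
  have := cb k; rewrite ler_norml => /andP[H _]; lra.
have vup : forall k s, @I01 R s -> h s + c k <= h 1 + C.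
  move=> k s Is; have /andP[_ hs1] := hb s Is.
  have := cb k; rewrite ler_norml => /andP[_ H]; lra.
pose L := - C - 1.
pose SB := [set b | b = L \/ exists k, 0 < \int[lebesgue_measure]_(s in BS b k) f s k].
have SBub : forall b, SB b -> b <= h 1 + C.
  move=> b [->|[k pos]]; first by rewrite /L; lra.
  have [s [[_ Is] bs]] := nonempty_of_pos _ _ pos.
  have := vup k s Is; move: bs => /=; lra.
have hsup : has_sup SB.
  split; first by exists L; left.
  by exists (h 1 + C) => b /SBub.
pose t := sup SB.
have tub : forall b, SB b -> b <= t.
  by move=> b Sb; exact: sup_upper_bound hsup b Sb.
have tle : forall x, (forall b, SB b -> b <= x) -> t <= x.
  by move=> x H; apply: ge_sup; [exists L; left | exact: H].
have Lt : L <= t by apply: tub; left.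
have nB : forall k n, lebesgue_measure.-negligible
    (BS (t + n.+1%:R^-1) k `&` [set s | f s k != 0]).
  move=> k n; apply: (@negl0 R (fun s => f s k)).
  - exact: mBS.
  - exact: BSI.
  - exact: fi.
  - by move=> s /BSI; exact: f0'.
  apply/eqP; rewrite eq_le BSge0 andbT leNgt; apply/negP => pos.
  have := tub (t + n.+1%:R^-1) (or_intror (ex_intro _ k pos)).
  have : 0 < n.+1%:R^-1 :> R by rewrite invr_gt0 ltr0n.
  move: (n.+1%:R^-1) => d; lra.
have negB : forall k, lebesgue_measure.-negligible
    ([set s | ~~ mu s k] `&` @I01 R `&` [set s | t < h s + c k] `&` [set s | f s k != 0]).
  move=> k; apply: (negligibleS _ (negligible_bigcup (nB k))).
  move=> s [[[nms Is] ts] fs].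
  have [n Hn] := ltr_add_invr ts.
  by exists n.
have nA : forall k n, lebesgue_measure.-negligible
    (AS (t - n.+1%:R^-1) k `&` [set s | f s k != 0]).
  move=> k n; apply: (@negl0 R (fun s => f s k)).
  - exact: mAS.
  - exact: ASI.
  - exact: fi.
  - by move=> s /ASI; exact: f0'.
  apply/eqP; rewrite eq_le ASge0 andbT leNgt; apply/negP => pos.
  have dpos : 0 < n.+1%:R^-1 :> R by rewrite invr_gt0 ltr0n.
  have : t <= t - n.+1%:R^-1.
    apply: tle => b [->|[k' posB]].
      have [s [[_ Is] vs]] := nonempty_of_pos _ _ pos.
      have := vlow k s Is; move: vs => /=; rewrite /L; move: (n.+1%:R^-1) => d; lra.
    rewrite leNgt; apply/negP => lt.
    exact: (FOC k k' (t - n.+1%:R^-1) b lt pos posB).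
  move: dpos; move: (n.+1%:R^-1) => d; lra.
have nS : forall k, lebesgue_measure.-negligible [set s | @I01 R s /\ h s + c k = t].
  move=> k; case: (pselect (exists s0, @I01 R s0 /\ h s0 + c k = t)) => [[s0 [I0 e0]]|Hn].
    exists [set s0]; split; [exact: measurable_set1 | exact: lebesgue_measure_set1 |].
    move=> s [Is es]; rewrite /=.
    have hs : h s = h s0 by lra.
    case: (ltgtP s s0) => // lt.
      by have := hm s s0 (mem_set Is) (mem_set I0) lt; lra.
    by have := hm s0 s (mem_set I0) (mem_set Is) lt; lra.
  have -> : [set s | @I01 R s /\ h s + c k = t] = set0.
    by apply/seteqP; split => s // H; apply: Hn; exists s.
  exact: negligible_set0.
have negA : forall k, lebesgue_measure.-negligible
    ([set s | mu s k] `&` @I01 R `&` [set s | h s + c k <= t] `&` [set s | f s k != 0]).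
  move=> k; apply: (negligibleS _ (negligibleU (negligible_bigcup (nA k)) (nS k))).
  move=> s [[[ms Is] vt] fs]; move: vt => /=; rewrite le_eqVlt => /orP[/eqP vt|vt].
    by right.
  left; have [n Hn] := ltr_add_invr vt.
  exists n => //; split => //; split => //=; move: Hn; move: (n.+1%:R^-1) => d; lra.
pose mu' := fun s k => t < h s + c k.
have alc' : allocation mu'.
  move=> k.
  have -> : @I01 R `&` [set s | mu' s k] = @I01 R `&` [set s | t - c k < h s].
    by apply/seteqP; split => s [Is H]; split => //=; move: H => /=; rewrite /mu'; lra.
  exact: hset_gt.
have ae : ae_equal f mu mu'.
  move=> k; apply: (negligibleS _ (negligibleU (negA k) (negB k))).
  move=> s [/set_mem Is [fs]]; rewrite /mu'.
  case: (boolP (mu s k)) => ms; case: (boolP (t < h s + c k)) => vt //= _.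
    by left; split => //; split => //; rewrite leNgt.
  by right; split => //; split => //; split => //=; rewrite ms.
have xmeq : forall k, xm f mu' k = xm f mu k.
  by move=> k; apply/esym/xm_ae; [exact: fi | exact: alc | exact: alc' | exact: ae].
exists mu'; split => //; split; last first.
  by rewrite (eq_bigr _ (fun k _ => xmeq k)).
move=> s k Is; rewrite /Astar !xmeq -/(c k); split.
  move=> ts s' k' Is' nts'; apply: hinvm; rewrite xmeq -/(c k').
  move: nts' ts; rewrite /mu' -leNgt; lra.
move=> H; have := H s k Is; rewrite /mu'.
case: (boolP (t < h s + c k)) => // nts /(_ isT).
by rewrite xmeq -/(c k) ltxx.
Qed.
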